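(* Let $\vec{S}$ be a signed digraph on $n$ vertices with no self-loops and no dual edges, and suppose $\vec{S}$ is cycle-disjoint. For $k=3,\ldots,n$ let $c_k^+$ (resp. $c_k^-$) be the number of positive (resp. negative) cycles of length $k$ in $\vec{S}$, and let $n_{\textrm{cyc}}=\sum_{k} k\,(c_k^+ + c_k^-)$ be the number of vertices lying on a cycle. Then the eigenvalue spectrum (as a multiset) of the adjacency matrix $\mathbf{A}$ of $\vec{S}$ consists of the eigenvalue $0$ with multiplicity $n-n_{\textrm{cyc}}$, together with the union, over $k=3,\ldots,n$, of $c_k^+$ copies of the $k$-th roots of unity and $c_k^-$ copies of the $k$-th roots of $-1$.
   Context: A signed digraph is a directed graph on vertex set $\{v_1,\ldots,v_n\}$ in which each edge $v_i\to v_j$ carries a sign $\sigma_{ij}\in\{-1,+1\}$. Its adjacency matrix $\mathbf{A}=(a_{ij})$ has $a_{ij}=\sigma_{ij}$ if $v_i\to v_j$ is an edge and $a_{ij}=0$ otherwise. No self-loops means $v_i\to v_i$ is never an edge; no dual edges means that if $v_i\to v_j$ is an edge then $v_j\to v_i$ is not. A cycle of length $k$ is a directed path of length $k$ from a vertex back to itself that visits no vertex twice (other than start/end), respecting edge directions; it is positive (negative) if the product of the signs of its edges is $+1$ ($-1$). $\vec{S}$ is cycle-disjoint if every vertex lies on at most one cycle. *)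

(* Defs.v *)
From HB Require Import structures.
From mathcomp Require Import all_boot all_order all_algebra all_field.
Set Implicit Arguments. Unset Strict Implicit. Unset Printing Implicit Defensive.
Import Order.TTheory GRing.Theory Num.Theory.
Local Open Scope ring_scope.

(* A signed digraph on vertex set 'I_n is represented by its adjacency matrix
   A : 'M[int]_n, with entries in {-1, 0, 1}; v_i -> v_j is an edge iff A i j != 0,
   and its sign is A i j. *)

Definition signed_adj (n : nat) (A : 'M[int]_n) : Prop :=
  forall i j, A i j = 0 \/ A i j = 1 \/ A i j = -1.

Definition edge (n : nat) (A : 'M[int]_n) : rel 'I_n := fun i j => A i j != 0.

Definition no_self_loops (n : nat) (A : 'M[int]_n) : Prop :=
  forall i, ~~ edge A i i.

Definition no_dual_edges (n : nat) (A : 'M[int]_n) : Prop :=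
  forall i j, edge A i j -> ~~ edge A j i.

(* Representing a cycle by its edge set identifies the k rotations
   of the vertex sequence, so cycles are counted as subgraphs. *)
Definition is_cycle_of_length (n : nat) (A : 'M[int]_n) (k : nat)
    (E : {set 'I_n * 'I_n}) : bool :=
  (0 < k)%N &&
  [exists s : k.-tuple 'I_n,
    [&& uniq s, cycle (edge A) s & E == [set (x, next s x) | x in s]]].

Definition cycle_sign (n : nat) (A : 'M[int]_n) (E : {set 'I_n * 'I_n}) : int :=
  \prod_(e in E) A e.1 e.2.

Definition on_cycle (n : nat) (v : 'I_n) (E : {set 'I_n * 'I_n}) : bool :=
  [exists w, (v, w) \in E].

Definition cycle_disjoint (n : nat) (A : 'M[int]_n) : Prop :=
  forall (v : 'I_n) (E1 E2 : {set 'I_n * 'I_n}) (k1 k2 : nat),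
    is_cycle_of_length A k1 E1 -> is_cycle_of_length A k2 E2 ->
    on_cycle v E1 -> on_cycle v E2 -> E1 = E2.

Definition num_pos_cycles (n : nat) (A : 'M[int]_n) (k : nat) : nat :=
  #|[set E : {set 'I_n * 'I_n} |
       is_cycle_of_length A k E && (cycle_sign A E == 1)]|.

Definition num_neg_cycles (n : nat) (A : 'M[int]_n) (k : nat) : nat :=
  #|[set E : {set 'I_n * 'I_n} |
       is_cycle_of_length A k E && (cycle_sign A E == -1)]|.

Definition n_cyc (n : nat) (A : 'M[int]_n) : nat :=
  (\sum_(3 <= k < n.+1) k * (num_pos_cycles A k + num_neg_cycles A k))%N.

Definition adjC (n : nat) (A : 'M[int]_n) : 'M[algC]_n := map_mx intr A.

(* Main.v *)
Require Import Defs.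
From HB Require Import structures.
From mathcomp Require Import all_boot all_order all_algebra all_field.
From mathcomp Require Import perm.
Set Implicit Arguments. Unset Strict Implicit. Unset Printing Implicit Defensive.
Import Order.TTheory GRing.Theory Num.Theory.
Local Open Scope ring_scope.

Definition resm (R : ringType) n (M : 'M[R]_n) (U : {set 'I_n}) : 'M[R]_n :=
  \matrix_(i, j) if i \in U then M i j else (i == j)%:R.

Definition resp (R : ringType) n (M : 'M[R]_n) (U : {set 'I_n}) :=
  forall i j, M i j != 0 -> i \in U -> j \in U.

Lemma resm_mul (R : ringType) n (M : 'M[R]_n) (U V : {set 'I_n}) :
  resp M U -> [disjoint U & V] -> resm M (U :|: V) = resm M U *m resm M V.
Proof.
move=> rU dUV; apply/matrixP => i j; rewrite !mxE in_setU.
have [iU|iU] := boolP (i \in U) => /=.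
  rewrite (bigD1 j) //= big1 ?addr0 => [|l lj]; rewrite !mxE iU.
    have [Mij|/rU/(_ iU) jU] := eqVneq (M i j) 0; first by rewrite Mij mul0r.
    by rewrite (disjointFr dUV jU) eqxx mulr1.
  have [->|/rU/(_ iU) lU] := eqVneq (M i l) 0; first by rewrite mul0r.
  by rewrite (disjointFr dUV lU) (negbTE lj) mulr0.
rewrite (bigD1 i) //= big1 ?addr0 => [|l li]; rewrite !mxE ?(negbTE iU).
  by rewrite eqxx mul1r.
by rewrite eq_sym (negbTE li) mul0r.
Qed.

Lemma resm0 (R : ringType) n (M : 'M[R]_n) : resm M set0 = 1%:M.
Proof. by apply/matrixP => i j; rewrite !mxE in_set0. Qed.

Lemma det_cover (R : comRingType) n (M : 'M[R]_n) (Om : {set {set 'I_n}}) :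
  (forall o, o \in Om -> resp M o) -> trivIset Om ->
  \det (resm M (cover Om)) = \prod_(o in Om) \det (resm M o).
Proof.
elim: {Om}#|Om| {-2}Om (eqxx #|Om|) => [|m IH] Om cOm hr tr.
  move/eqP/cards0_eq: cOm => ->.
  by rewrite /cover !big_set0 resm0 det1.
have [o oOm] : exists o, o \in Om.
  by apply/set0Pn; rewrite -card_gt0 (eqP cOm).
rewrite (big_setD1 o) //= -IH; first last.
- exact: trivIsetD.
- by move=> o' /setD1P[_ /hr].
- by move: (cardsD1 o Om); rewrite oOm (eqP cOm) add1n => -[<-].
have -> : cover Om = o :|: cover (Om :\ o).
  rewrite coverD1 //; apply/setP => x; rewrite !inE.
  case: (boolP (x \in o)) => //= xo; rewrite /cover; apply/bigcupP; by exists o.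
rewrite (@resm_mul _ _ M o) ?det_mulmx //; first exact: hr.
rewrite coverD1 // disjoints_subset; apply/subsetP => x xo; rewrite !inE xo.
by [] .
Qed.

Lemma resmT (R : ringType) n (M : 'M[R]_n) : resm M setT = M.
Proof. by apply/matrixP => i j; rewrite !mxE in_setT. Qed.

Lemma porbit_mem_eq n (s : {perm 'I_n}) x y : y \in porbit s x -> porbit s y = porbit s x.
Proof. by rewrite -eq_porbit_mem => /eqP. Qed.

Lemma triv_porbits n (s : {perm 'I_n}) : trivIset (porbits s).
Proof.
apply/trivIsetP => A B /imsetP[a _ ->] /imsetP[b _ ->] neq.
rewrite disjoints_subset; apply/subsetP => x xa; rewrite inE.
apply: contra neq => xb.
by rewrite -(porbit_mem_eq xa) -(porbit_mem_eq xb).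
Qed.

Lemma cover_porbits n (s : {perm 'I_n}) : cover (porbits s) = setT.
Proof.
apply/setP => x; rewrite inE; apply/bigcupP; exists (porbit s x).
  exact: imset_f. exact: porbit_id.
Qed.

Lemma porbit_closed n (s : {perm 'I_n}) x i : i \in porbit s x -> s i \in porbit s x.
Proof.
move=> io; rewrite -(porbit_mem_eq io).
by have := mem_porbit s 1 i; rewrite expg1.
Qed.

Definition cyc_fun n (s : {perm 'I_n}) (o : {set 'I_n}) i :=
  if i \in o then s i else i.

Lemma cyc_inj n (s : {perm 'I_n}) x : injective (cyc_fun s (porbit s x)).
Proof.
move=> a b; rewrite /cyc_fun.
case: ifP => ha; case: ifP => hb; first exact: perm_inj.
- by move=> e; move: (porbit_closed ha); rewrite e hb.
- by move=> e; move: (porbit_closed hb); rewrite -e ha.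
- by [].
Qed.

Definition cyc n (s : {perm 'I_n}) x : {perm 'I_n} := perm (@cyc_inj n s x).

Lemma cycE n (s : {perm 'I_n}) x i :
  cyc s x i = if i \in porbit s x then s i else i.
Proof. by rewrite permE. Qed.

Lemma cyc_iter n (s : {perm 'I_n}) x m i : i \in porbit s x ->
  (cyc s x ^+ m)%g i = (s ^+ m)%g i.
Proof.
move=> io; rewrite !permX; elim: m => //= m ->.
rewrite cycE; suff -> : iter m s i \in porbit s x by [].
rewrite -(porbit_mem_eq io) -permX; exact: mem_porbit.
Qed.

Lemma porbit_cyc_in n (s : {perm 'I_n}) x i : i \in porbit s x ->
  porbit (cyc s x) i = porbit s x.
Proof.
move=> io; rewrite -(porbit_mem_eq io); apply/setP => y.
by apply/porbitP/porbitP => -[m ->]; exists m; rewrite cyc_iter.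
Qed.

Lemma porbit_cyc_out n (s : {perm 'I_n}) x i : i \notin porbit s x ->
  porbit (cyc s x) i = [set i].
Proof.
move=> io; apply/setP => y; rewrite inE; apply/porbitP/eqP => [[m ->]|->].
  by rewrite permX; elim: m => //= m ->; rewrite cycE (negbTE io).
by exists 0%N; rewrite expg0 perm1.
Qed.

Lemma porbits_cyc n (s : {perm 'I_n}) x :
  porbits (cyc s x) = porbit s x |: [set [set i] | i in ~: porbit s x].
Proof.
apply/setP => O; rewrite !inE; apply/imsetP/orP => [[i _ ->]|[/eqP ->|/imsetP[i]]].
- case: (boolP (i \in porbit s x)) => io.
    by left; rewrite porbit_cyc_in.
  by right; rewrite porbit_cyc_out //; apply: imset_f; rewrite inE.
- by exists x => //; rewrite porbit_cyc_in // porbit_id.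
- by rewrite inE => io ->; exists i => //; rewrite porbit_cyc_out.
Qed.

Lemma odd_cyc n (s : {perm 'I_n}) x :
  odd_perm (cyc s x) = ~~ odd #|porbit s x|.
Proof.
rewrite /odd_perm porbits_cyc cardsU1 card_imset; last exact: set1_inj.
have -> : (porbit s x \in [set [set i] | i in ~: porbit s x]) = false.
  apply/imsetP => -[i]; rewrite inE => io e.
  by move: (porbit_id s x); rewrite e inE => /eqP xi; rewrite -xi porbit_id in io.
rewrite cardsCs setCK card_ord add1n /= oddB; last first.
  by apply: leq_trans (max_card _) _; rewrite card_ord.
by case: (odd n); case: (odd _).
Qed.

Lemma mup_prod (I : finType) (P : pred I) (q : I -> {poly algC}) z :
  (forall i, P i -> q i != 0) ->
  mup z (\prod_(i | P i) q i) = (\sum_(i | P i) mup z (q i))%N.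
Proof.
move=> nz.
suff [] : (\prod_(i | P i) q i != 0) /\
  mup z (\prod_(i | P i) q i) = (\sum_(i | P i) mup z (q i))%N by [].
apply: (big_ind2 (fun p m => p != 0 /\ mup z p = m)).
- by rewrite oner_neq0 mupNroot // root1.
- by move=> a b c d [a0 <-] [c0 <-]; rewrite mulf_neq0 // mupM.
- by move=> i Pi; split => //; exact: nz.
Qed.

Lemma mup_XnC (z c : algC) k : c != 0 -> (0 < k)%N ->
  mup z ('X^k - c%:P) = (z ^+ k == c).
Proof.
move=> c0 k0; set q := 'X^k - c%:P.
have q0 : q != 0 by rewrite -size_poly_eq0 size_XnsubC.
have rq : root q z = (z ^+ k == c) by rewrite /root !hornerE subr_eq0.
case: (boolP (root q z)) => r; last by rewrite mupNroot // -rq (negbTE r).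
rewrite -rq r; apply/eqP; rewrite eqn_leq mup_leq // mup_geq // expr1.
rewrite dvdp_XsubCl r andbT; apply/negP => /dvdpP[p qE].
have z0 : z != 0 by apply: contra c0; move: r; rewrite rq => /eqP <- /eqP ->; rewrite expr0n eqn0Ngt k0 /= eqxx.
have : (q^`()).[z] = 0.
  rewrite qE derivM expr2 derivM derivXsubC !(hornerD, hornerM) hornerN hornerX !hornerC subrr.
  by rewrite !(mulr0, mul0r, addr0).
rewrite /q derivB derivXn derivC subr0 hornerMn hornerXn.
by move/eqP; rewrite mulrn_eq0 expf_eq0 (negbTE z0) andbF orbF eqn0Ngt k0.
Qed.

Lemma sum_ind_nat (F : nat -> nat) m n : (3 <= m <= n)%N ->
  (\sum_(3 <= k < n.+1) (m == k) * F k)%N = F m.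
Proof.
move=> /andP[h1 h2].
rewrite (eq_bigr (fun k => if k == m then F k else 0%N)); last first.
  by move=> k _; rewrite eq_sym; case: eqP => [->|]; rewrite ?mul1n ?mul0n.
by rewrite -big_mkcond big_nat1_eq h1 ltnS h2.
Qed.

Section Proof1.
Variables (n : nat) (A : 'M[int]_n).
Hypotheses (Hsig : signed_adj A) (Hnl : no_self_loops A)
  (Hnd : no_dual_edges A) (Hcd : cycle_disjoint A).

Lemma cycP k E : is_cycle_of_length A k E -> exists s : seq 'I_n,
  [/\ uniq s, cycle (edge A) s, size s = k, (0 < k)%N &
      E = [set (x, next s x) | x in s]].
Proof.
case/andP => k0 /existsP[s /and3P[u c /eqP ->]].
by exists s; split => //; exact: size_tuple.
Qed.

Lemma memE (s : seq 'I_n) v w :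
  ((v,w) \in [set (x, next s x) | x in s]) = (v \in s) && (w == next s v).
Proof.
apply/imsetP/andP => [[x xs [-> ->]]|[vs /eqP ->]]; [by split|by exists v].
Qed.

Lemma size_le_n (s : seq 'I_n) : uniq s -> (size s <= n)%N.
Proof. by move=> u; rewrite -(card_uniqP u); apply: leq_trans (max_card _) _; rewrite card_ord. Qed.

Definition incyc v w := [exists k : 'I_n.+1,
  [exists E, is_cycle_of_length A k E && ((v,w) \in E)]].

Lemma incycP v w : reflect (exists k E, is_cycle_of_length A k E /\ (v,w) \in E)
  (incyc v w).
Proof.
apply: (iffP idP) => [/existsP[k /existsP[E /andP[h1 h2]]]|[k [E [h1 h2]]]].
  by exists k, E.
have [s [u _ sk _ _]] := cycP h1.
have kn : (k < n.+1)%N by rewrite ltnS -sk size_le_n.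
by apply/existsP; exists (Ordinal kn); apply/existsP; exists E; rewrite h1 h2.
Qed.

Lemma incyc_seq v w : incyc v w -> exists k (s : seq 'I_n),
  [/\ is_cycle_of_length A k [set (x, next s x) | x in s], uniq s,
     cycle (edge A) s, v \in s & w = next s v].
Proof.
case/incycP => k [E [h1 h2]]; have [s [u c sk k0 Es]] := cycP h1.
move: h2; rewrite {1}Es memE => /andP[vs /eqP ->].
by exists k, s; split => //; rewrite -Es.
Qed.

Lemma incyc_uniq v w w' : incyc v w -> incyc v w' -> w = w'.
Proof.
case/incycP => k [E [h1 h2]]; case/incycP => k' [E' [h1' h2']].
have EE : E = E'.
  by apply: (Hcd (v:=v) h1 h1'); apply/existsP; [exists w | exists w'].
subst E'; have [s [u c sk k0 Es]] := cycP h1.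
by move: h2 h2'; rewrite Es !memE => /andP[_ /eqP ->] /andP[_ /eqP ->].
Qed.

Lemma incyc_edge v w : incyc v w -> A v w != 0.
Proof.
case/incyc_seq => k [s [_ _ c vs ->]]; exact: (next_cycle c vs).
Qed.

Lemma incyc_neq v w : incyc v w -> v != w.
Proof.
move=> /incyc_edge h; apply/eqP => vw; subst w; by move: (Hnl v); rewrite /edge h.
Qed.

Lemma incyc_next v w : incyc v w -> exists u, incyc w u.
Proof.
case/incyc_seq => k [s [h1 u c vs ->]]; exists (next s (next s v)).
apply/incycP; exists k, [set (x, next s x) | x in s]; split => //.
by rewrite memE mem_next vs eqxx.
Qed.


Definition f0 v := if [pick w | incyc v w] is Some w then w else v.

Lemma f0E v w : incyc v w -> f0 v = w.
Proof.
move=> h; rewrite /f0; case: pickP => [w' h'|/(_ w)]; last by rewrite h.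
exact: incyc_uniq h' h.
Qed.

Lemma f0_move v : f0 v != v -> incyc v (f0 v).
Proof. by rewrite /f0; case: pickP => [w' h'|_]; rewrite ?eqxx. Qed.

Lemma incyc_f0_neq v w : incyc v w -> f0 w != w.
Proof. by case/incyc_next => u h; rewrite (f0E h) eq_sym incyc_neq. Qed.

Lemma f0_inj : injective f0.
Proof.
move=> a b; have [fa|fa] := eqVneq (f0 a) a; have [fb|fb] := eqVneq (f0 b) b.
- by rewrite fa fb.
- move=> e; have := f0_move fb; rewrite -e fa => /incyc_f0_neq.
  by rewrite fa eqxx.
- move=> e; have := f0_move fa; rewrite e fb => /incyc_f0_neq.
  by rewrite fb eqxx.
move=> e; have ha := f0_move fa; have hb := f0_move fb; rewrite -e in hb.
have [k [s [h1 u1 c as_ ea]]] := incyc_seq ha.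
have [k' [s' [h1' u1' c' bs eb]]] := incyc_seq hb.
have EE : [set (x, next s x) | x in s] = [set (x, next s' x) | x in s'].
  apply: (Hcd (v:=f0 a) h1 h1'); apply/existsP;
   [exists (next s (f0 a)) | exists (next s' (f0 a))];
   rewrite memE eqxx andbT; [rewrite {1}ea | rewrite {1}eb]; by rewrite mem_next.
have : (b, f0 a) \in [set (x, next s x) | x in s] by rewrite EE memE bs eb eqxx.
rewrite memE => /andP[_ /eqP]; rewrite {1}ea; exact: (can_inj (prev_next u1)).
Qed.

Definition fp : {perm 'I_n} := perm f0_inj.

Lemma fpE v : fp v = f0 v. Proof. by rewrite permE. Qed.

Lemma fp_move v : fp v != v -> incyc v (fp v).
Proof. by rewrite fpE; exact: f0_move. Qed.

Lemma fp_edge v : fp v != v -> A v (fp v) != 0.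
Proof. by move/fp_move/incyc_edge. Qed.

Lemma fp_incyc v w : incyc v w -> fp v = w.
Proof. by rewrite fpE; exact: f0E. Qed.


Lemma porbit_fix (s : {perm 'I_n}) x : s x = x -> porbit s x = [set x].
Proof.
move=> sx; apply/setP => y; rewrite inE; apply/porbitP/eqP => [[m ->]|->].
  by rewrite permX; elim: m => //= m ->.
by exists 0%N; rewrite expg0 perm1.
Qed.


Lemma porbit_s (s : {perm 'I_n}) x : s x \in porbit s x.
Proof. by have := mem_porbit s 1 x; rewrite expg1. Qed.

Lemma traj_fcycle (s : {perm 'I_n}) x : fcycle s (traject s x #|porbit s x|).
Proof.
have := card_porbit_neq0 s x; have := iter_porbit s x.
case: #|porbit s x| => // k hk _; rewrite trajectS /=.
rewrite -[X in rcons _ X]hk iterSr -trajectSr; exact: fpath_traject.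
Qed.

Lemma perm_cycle (s : {perm 'I_n}) i :
  s i != i -> (forall j, s j != j -> A j (s j) != 0) -> incyc i (s i).
Proof.
move=> si H; set t := traject s i #|porbit s i|.
have ut : uniq t by exact: uniq_traject_porbit.
have ct : fcycle s t by exact: traj_fcycle.
have it : i \in t.
  rewrite /t; have := card_porbit_neq0 s i; case: #|_| => // k _.
  by rewrite trajectS mem_head.
have tmov y : y \in t -> s y != y.
  move=> yt; apply/eqP => sy; move: (porbit_fix sy).
  have : y \in porbit s i by rewrite porbit_traject.
  move/porbit_mem_eq => -> e; move: (porbit_id s i) (porbit_s s i).
  by rewrite e !inE => /eqP ie _; rewrite ie sy eqxx in si.
have cE : path.cycle (edge A) t.
  apply: (cycle_from_next ut) => y yt; rewrite (nextE ct yt) /edge.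
  exact/H/tmov.
apply/incycP; exists (size t), [set (y, next t y) | y in t]; split.
  apply/andP; split; first by case: (t) it.
  by apply/existsP; exists (in_tuple t); rewrite /= ut cE eqxx.
by rewrite memE it (nextE ct it) eqxx.
Qed.


Definition B := adjC A.
Definition Pm : 'M[algC]_n := \matrix_(i, j) if j == fp i then B i j else 0.

Lemma BE i j : B i j = (A i j)%:~R. Proof. by rewrite mxE. Qed.

Lemma Bii i : B i i = 0.
Proof. by rewrite BE; move: (Hnl i); rewrite /edge negbK => /eqP ->. Qed.

Lemma char_poly_P : char_poly B = char_poly Pm.
Proof.
rewrite /char_poly /determinant; apply: eq_bigr => s _.
have [good|] := boolP [forall i, (s i == i) || (s i == fp i)].
  congr (_ * _); apply: eq_bigr => i _; rewrite !mxE.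
  case: ifP => // h; move/forallP: good => /(_ i); rewrite h orbF => /eqP ->.
  by rewrite -(Bii i) mxE.
rewrite negb_forall => /existsP[i]; rewrite negb_or => /andP[si sfi].
have [|] := boolP [exists j, (s j != j) && (A j (s j) == 0)].
  case/existsP => j /andP[sj /eqP Aj].
  have e1 : char_poly_mx B j (s j) = 0.
    by rewrite !mxE eq_sym (negbTE sj) Aj mulr0n sub0r oppr0.
  have e2 : char_poly_mx Pm i (s i) = 0.
    by rewrite !mxE eq_sym (negbTE si) (negbTE sfi) mulr0n sub0r oppr0.
  by rewrite (bigD1 j) //= (bigD1 i (P:=predT)) //= e1 e2 !(mul0r, mulr0).
rewrite negb_exists => /forallP H.
have : incyc i (s i).
  apply: perm_cycle => // j sj; move: (H j); by rewrite sj.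
by move/fp_incyc => e; rewrite e eqxx in sfi.
Qed.


Definition Mc := char_poly_mx Pm.

Lemma resp_orbit o : o \in porbits fp -> resp Mc o.
Proof.
case/imsetP => x _ -> i j; rewrite !mxE.
have [<-|ij] := eqVneq i j => // h io.
move: h; rewrite mulr0n sub0r oppr_eq0 polyC_eq0.
case: (eqVneq j (fp i)) => [-> _|_]; last by rewrite eqxx.
by rewrite -(porbit_mem_eq io) porbit_s.
Qed.

Lemma char_poly_prod :
  char_poly Pm = \prod_(o in porbits fp) \det (resm Mc o).
Proof.
rewrite -det_cover; last exact: triv_porbits; last exact: resp_orbit.
by rewrite cover_porbits resmT.
Qed.


Section Orbit.
Variable x : 'I_n.
Let o := porbit fp x.
Let R := resm Mc o.

Lemma RE i j : R i j = if i \in o then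
  'X *+ (i == j) - (if j == fp i then B i j else 0)%:P else (i == j)%:R.
Proof. by rewrite /R !mxE. Qed.

Definition goodp (s : {perm 'I_n}) :=
  [forall i, (s i == i) || ((i \in o) && (s i == fp i))].

Lemma term0 (s : {perm 'I_n}) : ~~ goodp s -> \prod_i R i (s i) = 0.
Proof.
rewrite negb_forall => /existsP[i]; rewrite negb_or => /andP[si h].
rewrite (bigD1 i) //= RE eq_sym (negbTE si); case: ifP => io.
  by move: h; rewrite io /= => /negbTE ->; rewrite mulr0n sub0r oppr0 mul0r.
by rewrite mul0r.
Qed.

Lemma good_cases (s : {perm 'I_n}) : goodp s -> s = 1%g \/ s = cyc fp x.
Proof.
move/forallP => g.
have [all1|] := boolP [forall i, s i == i].
  by left; apply/permP => i; rewrite perm1; apply/eqP; move/forallP: all1.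
rewrite negb_forall => /existsP[y sy]; right.
have /orP[|/andP[yo sfy]] := g y; first by rewrite (negbTE sy).
have key m : s ((fp ^+ m)%g y) = fp ((fp ^+ m)%g y).
  elim: m => [|m IH]; first by rewrite expg0 perm1; exact/eqP.
  rewrite expgSr permM; set z := (fp ^+ m)%g y in IH *.
  have /orP[/eqP e|/andP[_ /eqP //]] := g (fp z).
  have zz : fp z = z by apply: (@perm_inj _ s); rewrite e IH.
  by rewrite e zz.
apply/permP => i; rewrite cycE.
case: ifP => io.
  have : i \in porbit fp y by rewrite (porbit_mem_eq yo).
  by case/porbitP => m ->.
by have /orP[/eqP //|/andP[]] := g i; rewrite /o io.
Qed.


Lemma det_orbit : \det R = 'X^#|o| - (\prod_(i in o) B i (fp i))%:P.
Proof.
rewrite /determinant (bigD1 (1%g : 'S_n)) //= odd_perm1 expr0 mul1r.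
have [fx|fx] := eqVneq (fp x) x.
  have oE : o = [set x] by rewrite /o porbit_fix.
  have c1 : cyc fp x = 1%g.
    apply/permP => i; rewrite cycE perm1 -/o oE inE.
    by case: eqP => // ->.
  rewrite [X in _ + X = _]big1 ?addr0 => [|s s1]; last first.
    have [g|ng] := boolP (goodp s); last by rewrite term0 ?mulr0.
    by case: (good_cases g) => e; rewrite e ?c1 eqxx in s1.
  rewrite oE cards1 big_set1 expr1 fx (bigD1 x) //= big1 => [|i ix].
    by rewrite perm1 RE oE inE !eqxx fx eqxx mulr1 mulr1n.
  by rewrite perm1 RE oE inE (negbTE ix) eqxx.
have nf i : i \in o -> fp i != i.
  move=> io; apply/eqP => fi; move: (porbit_fix fi); rewrite (porbit_mem_eq io).
  move=> e; move: (porbit_id fp x) (porbit_s fp x); rewrite e !inE.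
  by move=> /eqP xi _; rewrite -xi in fi; rewrite fi eqxx in fx.
have c1 : cyc fp x != 1%g.
  apply: contra fx => /eqP e; have := cycE fp x x; rewrite e perm1 porbit_id.
  by move=> <-.
rewrite (bigD1 (cyc fp x)) //= [X in _ + (_ + X) = _]big1 ?addr0 => [|s /andP[s1 sc]]; last first.
  have [g|ng] := boolP (goodp s); last by rewrite term0 ?mulr0.
  by case: (good_cases g) => e; rewrite e eqxx ?andbF in s1 sc.
have -> : \prod_i R i ((1%g : 'S_n) i) = 'X ^+ #|o|.
  rewrite -prodr_const [RHS]big_mkcond /=; apply: eq_bigr => i _; rewrite perm1 RE eqxx.
  case: ifP => io //; rewrite eq_sym (negbTE (nf i io)) subr0 mulr1n //.
have -> : \prod_i R i (cyc fp x i) = \prod_(i in o) - (B i (fp i))%:P.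
  rewrite [RHS]big_mkcond /=; apply: eq_bigr => i _; rewrite RE cycE -/o.
  case io: (i \in o); last by rewrite eqxx.
  by rewrite eqxx eq_sym (negbTE (nf i io)) mulr0n sub0r.
rewrite prodrN odd_cyc -/o -rmorph_prod /= -[(-1) ^+ #|o|]signr_odd.
by case: (odd #|o|); rewrite /= ?expr0 ?expr1 ?mul1r ?mulN1r.
Qed.

End Orbit.


Definition ws (o : {set 'I_n}) := \prod_(i in o) A i (fp i).
Definition Phi (o : {set 'I_n}) : {set 'I_n * 'I_n} := [set (i, fp i) | i in o].

Lemma Phi_memE o a b : ((a, b) \in Phi o) = (a \in o) && (b == fp a).
Proof.
apply/imsetP/andP => [[i io [-> ->]]|[ao /eqP ->]]; [by split|by exists a].
Qed.

Lemma Phi_inj : injective Phi.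
Proof.
move=> o1 o2 e; apply/setP => i.
by have := Phi_memE o1 i (fp i); rewrite e Phi_memE eqxx !andbT.
Qed.

Lemma orbit_nontriv o i : o \in porbits fp -> (1 < #|o|)%N -> i \in o -> fp i != i.
Proof.
case/imsetP => x _ -> o1 io; apply/eqP => fi.
by move: o1; rewrite -(porbit_mem_eq io) porbit_fix // cards1.
Qed.

Lemma sign_Phi o : cycle_sign A (Phi o) = ws o.
Proof.
rewrite /cycle_sign /Phi big_imset //=.
by move=> a b _ _ [].
Qed.

Lemma Phi_cyc o : o \in porbits fp -> (1 < #|o|)%N ->
  is_cycle_of_length A #|o| (Phi o).
Proof.
move=> oP o1; have nt := orbit_nontriv oP o1.
case/imsetP: oP nt o1 => x _ -> nt o1.
set t := traject fp x #|porbit fp x|.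
have ut : uniq t by exact: uniq_traject_porbit.
have ct : fcycle fp t by exact: traj_fcycle.
have tE y : (y \in t) = (y \in porbit fp x) by rewrite porbit_traject.
apply/andP; split; first exact: ltnW.
apply/existsP; exists (@Tuple _ _ t (introT eqP (size_traject _ _ _))) => /=.
rewrite ut /=; apply/andP; split.
  apply: (cycle_from_next ut) => y yt; rewrite (nextE ct yt) /edge.
  by apply: fp_edge; apply: nt; rewrite -tE.
apply/eqP/setP => -[a b]; rewrite Phi_memE memE tE.
case: (boolP (a \in porbit fp x)) => //= ao.
by rewrite (nextE ct); rewrite ?tE.
Qed.

Lemma cyc_Phi k E : is_cycle_of_length A k E ->
  exists2 o, o \in porbits fp & [/\ (1 < #|o|)%N, #|o| = k & E = Phi o].
Proof.
move=> hc; have [s [u c sk k0 Es]] := cycP hc.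
case: s u c sk Es => [|x s'] u c sk Es; first by rewrite -sk in k0.
set s := x :: s' in u c sk Es *.
have xs : x \in s by rewrite mem_head.
have fpE y : y \in s -> fp y = next s y.
  move=> ys; apply: fp_incyc; apply/incycP; exists k, E; split => //.
  by rewrite Es memE ys eqxx.
have sub1 m : iter m fp x \in s.
  elim: m => //= m IH; rewrite fpE // mem_next //.
have seqo y : (y \in s) = (y \in porbit fp x).
  apply/idP/idP => [ys|/porbitP[m ->]]; last by rewrite permX.
  have := fconnect_cycle (cycle_next u) xs y; rewrite ys => /iter_findex.
  move: (findex _ _ _) => m <-.
  have -> : iter m (next s) x = iter m fp x.
    by elim: m => //= m ->; rewrite fpE.
  by rewrite -permX mem_porbit.
exists (porbit fp x); first exact: imset_f.
have fx : fp x != x.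
  rewrite fpE // eq_sym; apply: incyc_neq; apply/incycP; exists k, E.
  by split => //; rewrite Es memE xs eqxx.
split.
- apply: leq_trans (subset_leq_card (_ : [set x; fp x] \subset _)).
    by rewrite cards2 eq_sym fx.
  apply/subsetP => y; rewrite !inE => /orP[] /eqP ->.
    exact: porbit_id.
  exact: porbit_s.
- by rewrite -sk -(card_uniqP u); apply: eq_card => y; rewrite seqo.
apply/setP => -[a b]; rewrite Es memE Phi_memE -seqo.
by case: (boolP (a \in s)) => //= as_; rewrite fpE.
Qed.

Lemma count_cycles k (eps : int) :
  #|[set E | is_cycle_of_length A k E && (cycle_sign A E == eps)]| =
  #|[set o in porbits fp | [&& (1 < #|o|)%N, #|o| == k & ws o == eps]]|.
Proof.
rewrite -(card_imset _ Phi_inj); apply: eq_card => E; rewrite inE.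
apply/idP/imsetP => [/andP[hc /eqP hs]|[o]].
  have [o oP [o1 ok EP]] := cyc_Phi hc; exists o => //.
  by rewrite inE oP o1 ok eqxx -sign_Phi -EP hs eqxx.
rewrite inE => /andP[oP /and3P[o1 /eqP ok /eqP we]] ->.
by rewrite sign_Phi we eqxx -ok Phi_cyc.
Qed.


Lemma ws_pm o : o \in porbits fp -> (1 < #|o|)%N -> ws o = 1 \/ ws o = -1.
Proof.
move=> oP o1; apply: (big_ind (fun v : int => v = 1 \/ v = -1)).
- by left.
- by move=> a b [->|->] [->|->]; rewrite ?mulr1 ?mul1r ?mulrN1 ?opprK; auto.
move=> i io; have := fp_edge (orbit_nontriv oP o1 io).
by case: (Hsig i (fp i)) => [->|[->|->]]; rewrite ?eqxx //; auto.
Qed.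

Lemma orbit_triv o : o \in porbits fp -> ~~ (1 < #|o|)%N -> #|o| = 1%N /\ ws o = 0.
Proof.
case/imsetP => x _ -> o1.
have fx : fp x = x.
  apply/eqP; apply: contraR o1 => fx.
  apply: leq_trans (subset_leq_card (_ : [set x; fp x] \subset _)).
    by rewrite cards2 eq_sym fx.
  apply/subsetP => y; rewrite !inE => /orP[] /eqP ->.
    exact: porbit_id.
  exact: porbit_s.
rewrite porbit_fix // cards1 /ws big_set1 fx; split => //.
by move: (Hnl x); rewrite /edge negbK => /eqP.
Qed.

Lemma orbit_size o : o \in porbits fp -> (1 < #|o|)%N -> (3 <= #|o| <= n)%N.
Proof.
move=> oP o1; apply/andP; split; last first.
  by apply: leq_trans (max_card _) _; rewrite card_ord.
rewrite ltn_neqAle o1 andbT eq_sym; apply/eqP => o2.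
have nt := orbit_nontriv oP o1.
case/imsetP: oP nt o2 => x _ -> nt o2.
have xo := porbit_id fp x; have fxo := porbit_s fp x.
have ffx : fp (fp x) = x by have := iter_porbit fp x; rewrite o2.
have := Hnd (fp_edge (nt x xo)); rewrite /edge.
by rewrite -{2}ffx (fp_edge (nt _ fxo)).
Qed.

Lemma sum_by_size (G : nat -> int -> nat) :
  (\sum_(o in porbits fp | (1 < #|o|)%N) G #|o| (ws o))%N =
  (\sum_(3 <= k < n.+1) (num_pos_cycles A k * G k 1%R + num_neg_cycles A k * G k (-1)%R))%N.
Proof.
rewrite (eq_bigr (fun o : {set 'I_n} => \sum_(3 <= k < n.+1) (#|o| == k) * G k (ws o)))%N;
  last first.
  move=> o /andP[oP o1]; rewrite (sum_ind_nat (fun k => G k (ws o))) //.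
  exact: orbit_size.
rewrite exchange_big /=; apply: eq_bigr => k _.
rewrite /num_pos_cycles /num_neg_cycles !count_cycles.
have cE (eps : int) :
  #|[set o in porbits fp | [&& (1 < #|o|)%N, #|o| == k & ws o == eps]]| =
  (\sum_(o in porbits fp | (1 < #|o|)%N) ((#|o| == k) && (ws o == eps)))%N.
  rewrite -sum1_card big_mkcond [RHS]big_mkcond /=; apply: eq_bigr => o _.
  rewrite !inE.
  by case: (o \in porbits fp); case: (1 < #|o|)%N; case: (#|o| == k); case: (ws o == eps).
rewrite !cE !big_distrl -big_split /=; apply: eq_bigr => o /andP[oP o1].
case: eqP => [<-|] /=; last by rewrite !mul0n.
by case: (ws_pm oP o1) => ->; rewrite ?mul1n /=; rewrite ?mul0n ?addn0 ?add0n ?mul1n.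
Qed.


Lemma char_fact : char_poly (adjC A) =
  \prod_(o in porbits fp) ('X^#|o| - ((ws o)%:~R)%:P).
Proof.
rewrite -/B char_poly_P char_poly_prod; apply: eq_bigr => o /imsetP[x _ ->].
rewrite det_orbit; congr (_ - _%:P); rewrite rmorph_prod; apply: eq_bigr => i _.
by rewrite BE.
Qed.

Lemma sum_card : (\sum_(o in porbits fp) #|o|)%N = n.
Proof.
rewrite -(card_partition (D := setT)) ?cardsT ?card_ord //.
rewrite /partition cover_porbits eqxx triv_porbits /=.
by apply/imsetP => -[x _ e]; move: (porbit_id fp x); rewrite -e inE.
Qed.

Lemma main_eq z :
    mup z (char_poly (adjC A)) =
      ((n - n_cyc A) * (z == 0%R) +
       \sum_(3 <= k < n.+1)
          (num_pos_cycles A k * (z ^+ k == 1%R) +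
           num_neg_cycles A k * (z ^+ k == (-1)%R)))%N.
Proof.
rewrite char_fact mup_prod; last first.
  move=> o /imsetP[x _ ->]; rewrite -size_poly_eq0 size_XnsubC //.
  by rewrite lt0n card_porbit_neq0.
rewrite (bigID (fun o : {set 'I_n} => (1 < #|o|)%N)) /=.
set T := [set o in porbits fp | ~~ (1 < #|o|)%N].
have e1 : (\sum_(o in porbits fp | (1 < #|o|)%N) mup z ('X^#|o| - ((ws o)%:~R)%:P))%N
    = (\sum_(o in porbits fp | (1 < #|o|)%N) (fun k (e : int) => (z ^+ k == e%:~R) : nat) #|o| (ws o))%N.
  apply: eq_bigr => o /andP[oP o1]; rewrite mup_XnC //; last by rewrite ltnW.
  by case: (ws_pm oP o1) => ->; rewrite ?mulr1z ?mulrN1z ?oppr_eq0 oner_eq0.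
have e2 : (\sum_(o in porbits fp | ~~ (1 < #|o|)%N) mup z ('X^#|o| - ((ws o)%:~R)%:P))%N
    = (#|T| * (z == 0%R))%N.
  rewrite -sum_nat_const; apply: eq_big => [o|o /andP[oP o1]]; first by rewrite inE.
  have [-> ->] := orbit_triv oP o1.
  by rewrite mulr0z -[X in mup z X]expr1 subr0 -{1}(subr0 'X) mup_XsubCX eq_sym; case: (z == 0).
have e3 : #|T| = (n - n_cyc A)%N.
  have hc : n_cyc A = (\sum_(o in porbits fp | (1 < #|o|)%N) #|o|)%N.
    rewrite (sum_by_size (fun k _ => k)) /n_cyc; apply: eq_bigr => k _.
    by rewrite mulnDr !(mulnC k).
  have eT : #|T| = (\sum_(o in porbits fp | ~~ (1 < #|o|)%N) #|o|)%N.
    rewrite -sum1_card; apply: eq_big => [o|o]; first by rewrite inE.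
    by rewrite inE => /andP[oP o1]; have [-> _] := orbit_triv oP o1.
  have e : (#|T| + n_cyc A)%N = n.
    by rewrite eT hc addnC -(bigID (fun o : {set 'I_n} => (1 < #|o|)%N)) sum_card.
  apply/eqP; rewrite -(eqn_add2r (n_cyc A)) subnK; first by rewrite e.
  by apply: leq_trans (leq_addl #|T| _) _; rewrite e.
rewrite e1 e2 e3 (sum_by_size (fun k (e : int) => (z ^+ k == e%:~R) : nat)) addnC.
by rewrite mulr1z mulrN1z.
Qed.

End Proof1.

Unset Implicit Arguments.

Theorem proposition1 (n : nat) (A : 'M[int]_n) :
  signed_adj A -> no_self_loops A -> no_dual_edges A -> cycle_disjoint A ->
  forall z : algC,
    mup z (char_poly (adjC A)) =
      ((n - n_cyc A) * (z == 0%R) +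
       \sum_(3 <= k < n.+1)
          (num_pos_cycles A k * (z ^+ k == 1%R) +
           num_neg_cycles A k * (z ^+ k == (-1)%R)))%N.
Proof. move=> h1 h2 h3 h4 z; exact: main_eq. Qed.
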